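(* Let $\lambda\neq0$ be real, let $\mathcal{F}_\lambda=\{m(x)\,dx^\lambda: m\in C^\infty(S^1)\}$ with the action $L_\xi(m\,dx^\lambda)=(m\circ\xi)(\partial_x\xi)^\lambda dx^\lambda$ of $\xi\in\mathrm{Diff}(S^1)$, and let $\mathcal{M}_\lambda\subset\mathcal{F}_\lambda$ be the set of those $m\,dx^\lambda$ with $m(x)\neq0$ for all $x\in S^1$. Then the map $$m\,dx^\lambda\mapsto \mathrm{sgn}(m)\,(H_{-1})^\lambda:\ \mathcal{M}_\lambda\to\mathbb{R}\setminus\{0\},\qquad H_{-1}=\int_0^1|m|^{1/\lambda}dx,$$ is constant on the $\mathrm{Diff}(S^1)$-orbits in $\mathcal{M}_\lambda$ and induces a bijection between the orbit space $\mathcal{M}_\lambda/\mathrm{Diff}(S^1)$ and $\mathbb{R}\setminus\{0\}$.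
   Context: $S^1=\mathbb{R}/\mathbb{Z}\simeq[0,1)$; $\mathrm{Diff}(S^1)$ is the group of orientation-preserving smooth circle diffeomorphisms. Since $m$ is nowhere zero on the connected circle, $\mathrm{sgn}(m)\in\{\pm1\}$ is constant. *)

(* Defs.v *)
From Stdlib Require Import Reals.
From Coquelicot Require Import Coquelicot.
Open Scope R_scope.

Definition smooth (f : R -> R) : Prop := forall (n : nat) (x : R), ex_derive_n f n x.

(* C^oo(S^1), S^1 = R/Z: smooth 1-periodic functions on R. *)
Definition smooth_circ (m : R -> R) : Prop :=
  smooth m /\ forall x, m (x + 1) = m x.

(* Diff(S^1) (orientation preserving), represented by lifts xi : R -> R:
   smooth, xi(x+1) = xi(x) + 1, and xi' > 0 everywhere. *)
Definition circ_diff (xi : R -> R) : Prop :=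
  smooth xi /\ (forall x, xi (x + 1) = xi x + 1) /\ (forall x, 0 < Derive xi x).

Definition act (lam : R) (xi m : R -> R) : R -> R :=
  fun x => m (xi x) * Rpower (Derive xi x) lam.

Definition nonvanishing_density (m : R -> R) : Prop :=
  smooth_circ m /\ forall x, m x <> 0.

(* sgn(m) (constant since m is nowhere zero on the connected circle). *)
Definition sgn_dens (m : R -> R) : R := if Rlt_dec 0 (m 0) then 1 else -1.

Definition H_m1 (lam : R) (m : R -> R) : R :=
  RInt (fun x => Rpower (Rabs (m x)) (1 / lam)) 0 1.

Definition invariant (lam : R) (m : R -> R) : R :=
  sgn_dens m * Rpower (H_m1 lam m) lam.

Definition same_orbit (lam : R) (m1 m2 : R -> R) : Prop :=
  exists xi, circ_diff xi /\ forall x, m2 x = act lam xi m1 x.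

(* Main.v *)
Require Import Defs.
From Stdlib Require Import Reals Lra Lia ClassicalEpsilon.
From Coquelicot Require Import Coquelicot.
Open Scope R_scope.

Definition Cn (n : nat) (f : R -> R) : Prop :=
  forall k x, (k <= n)%nat -> ex_derive_n f k x.

Lemma Derive_n_shift h n x : Derive_n h (S n) x = Derive_n (Derive h) n x.
Proof.
  revert x; induction n as [|n IH]; intro x; [reflexivity|].
  change (Derive (Derive_n h (S n)) x = Derive (Derive_n (Derive h) n) x).
  apply Derive_ext; exact IH.
Qed.

Lemma ex_shift h n x : ex_derive_n h (S (S n)) x <-> ex_derive_n (Derive h) (S n) x.
Proof.
  change (ex_derive (Derive_n h (S n)) x <-> ex_derive (Derive_n (Derive h) n) x).
  split; apply ex_derive_ext; intro t; [|symmetry]; apply Derive_n_shift.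
Qed.

Lemma Cn_S n h : Cn (S n) h <-> (forall x, ex_derive h x) /\ Cn n (Derive h).
Proof.
  split.
  - intro H; split.
    + intro x; exact (H 1%nat x ltac:(lia)).
    + intros [|k] x Hk; [exact I|]. apply (proj1 (ex_shift h k x)). apply H. lia.
  - intros [H1 H2] [|[|k]] x Hk; [exact I| exact (H1 x)|].
    apply (proj2 (ex_shift h k x)). apply H2. lia.
Qed.

Lemma Cn_ext n f g : (forall x, f x = g x) -> Cn n f -> Cn n g.
Proof. intros E H k x Hk. apply ex_derive_n_ext with f; auto. Qed.

Lemma Cn_mono m n f : (m <= n)%nat -> Cn n f -> Cn m f.
Proof. intros Hmn H k x Hk. apply H. lia. Qed.

Lemma smooth_Cn f : smooth f <-> forall n, Cn n f.
Proof.
  split.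
  - intros H n k x _. apply H.
  - intros H n x. apply (H n n x). lia.
Qed.

Lemma Cn_0 f : Cn 0 f.
Proof. intros k x Hk. replace k with 0%nat by lia. exact I. Qed.

Lemma Cn_plus n f g : Cn n f -> Cn n g -> Cn n (fun x => f x + g x).
Proof.
  intros Hf Hg k x Hk. apply ex_derive_n_plus; apply filter_forall; intros y j Hj.
  apply Hf; lia. apply Hg; lia.
Qed.

Lemma Cn_const n c : Cn n (fun _ => c).
Proof. intros k x _. apply ex_derive_n_const. Qed.

Lemma Cn_id n : Cn n (fun x => x).
Proof.
  induction n as [|n IH]; [apply Cn_0|].
  apply Cn_S; split.
  - intro; apply ex_derive_id.
  - apply Cn_ext with (fun _ => 1). intro; symmetry; apply Derive_id. apply Cn_const.
Qed.

Lemma Cn_mult n f g : Cn n f -> Cn n g -> Cn n (fun x => f x * g x).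
Proof.
  revert f g; induction n as [|n IH]; intros f g Hf Hg; [apply Cn_0|].
  apply Cn_S in Hf as [Df Hf']. apply Cn_S in Hg as [Dg Hg'].
  pose proof (Cn_mono n (S n) f ltac:(lia) (proj2 (Cn_S n f) (conj Df Hf'))) as Hf0.
  pose proof (Cn_mono n (S n) g ltac:(lia) (proj2 (Cn_S n g) (conj Dg Hg'))) as Hg0.
  apply Cn_S; split.
  - intro x; apply ex_derive_mult; auto.
  - apply Cn_ext with (fun x => Derive f x * g x + f x * Derive g x).
    + intro x; symmetry; apply Derive_mult; auto.
    + apply Cn_plus; apply IH; auto.
Qed.

Lemma Cn_comp n f g : Cn n f -> Cn n g -> Cn n (fun x => f (g x)).
Proof.
  revert f g; induction n as [|n IH]; intros f g Hf Hg; [apply Cn_0|].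
  pose proof (Cn_mono n (S n) g ltac:(lia) Hg) as Hg0.
  apply Cn_S in Hf as [Df Hf']. apply Cn_S in Hg as [Dg Hg'].
  apply Cn_S; split.
  - intro x; apply ex_derive_comp; auto.
  - apply Cn_ext with (fun x => Derive g x * Derive f (g x)).
    + intro x; symmetry; apply Derive_comp; auto.
    + apply Cn_mult; auto.
Qed.

Lemma Cn_inv n f : (forall x, f x <> 0) -> Cn n f -> Cn n (fun x => / f x).
Proof.
  intro Hnz; induction n as [|n IH]; intros Hf; [apply Cn_0|].
  pose proof (Cn_mono n (S n) f ltac:(lia) Hf) as Hf0.
  apply Cn_S in Hf as [Df Hf'].
  apply Cn_S; split.
  - intro x; apply ex_derive_inv; auto.
  - apply Cn_ext with (fun x => (-1 * Derive f x) * (/ f x * / f x)).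
    + intro x; rewrite Derive_inv; auto. field. auto.
    + apply Cn_mult. apply Cn_mult; auto. apply Cn_const.
      apply Cn_mult; auto.
Qed.

Lemma is_derive_rpow u a x : 0 < u x -> ex_derive u x ->
  is_derive (fun y => Rpower (u y) a) x (Derive u x * (a * Rpower (u x) (a - 1))).
Proof.
  intros Hp Du.
  apply (is_derive_comp (fun y => Rpower y a) u x).
  - apply is_derive_Reals. apply derivable_pt_lim_power; auto.
  - apply Derive_correct; auto.
Qed.

Lemma Cn_rpow n u : (forall x, 0 < u x) -> Cn n u -> forall a, Cn n (fun x => Rpower (u x) a).
Proof.
  intro Hp; induction n as [|n IH]; intros Hu a; [apply Cn_0|].
  pose proof (Cn_mono n (S n) u ltac:(lia) Hu) as Hu0.
  apply Cn_S in Hu as [Du Hu'].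
  apply Cn_S; split.
  - intro x; eexists; apply is_derive_rpow; auto.
  - apply Cn_ext with (fun x => Derive u x * (a * Rpower (u x) (a - 1))).
    + intro x; symmetry; apply is_derive_unique, is_derive_rpow; auto.
    + apply Cn_mult; auto. apply Cn_mult. apply Cn_const. auto.
Qed.


Lemma incr_global F df : (forall x, is_derive F x (df x)) -> (forall x, 0 < df x) ->
  forall x y, x < y -> F x < F y.
Proof.
  intros D P x y Hxy.
  apply (incr_function F m_infty p_infty df); simpl; auto.
  intros; apply P.
Qed.

Lemma inv_derive F G df : (forall x, is_derive F x (df x)) -> (forall x, 0 < df x) ->
  (forall y, F (G y) = y) -> (forall x, G (F x) = x) ->
  forall y, is_derive G y (/ df (G y)).
Proof.
  intros D P FG GF y.
  pose proof (incr_global F df D P) as Inc.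
  assert (Gmono : forall a b, a < b -> G a < G b).
  { intros a b Hab. destruct (Rlt_or_le (G a) (G b)) as [h|h]; auto.
    exfalso. destruct (Rle_lt_or_eq_dec _ _ h) as [h'|h'].
    - apply Inc in h'. rewrite !FG in h'. lra.
    - apply (f_equal F) in h'. rewrite !FG in h'. lra. }
  assert (Fd : forall a, derivable_pt F a).
  { intro a. apply ex_derive_Reals_0. eexists; apply D. }
  assert (Fc : forall a, continuity_pt F a).
  { intro a. apply derivable_continuous_pt, Fd. }
  assert (Gc : continuity_pt G y).
  { apply (Ranalysis5.continuity_pt_recip_interv F G (G y - 1) (G y + 1)).
    - lra.
    - intros a b _ h _. apply Inc; auto.
    - intros a _ _. unfold comp, id. apply FG.
    - intros a h1 h2. split.
      + destruct (Rle_lt_or_eq_dec _ _ h1) as [h|h].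
        * apply Gmono in h. rewrite GF in h. lra.
        * subst a. rewrite GF. lra.
      + destruct (Rle_lt_or_eq_dec _ _ h2) as [h|h].
        * apply Gmono in h. rewrite GF in h. lra.
        * subst a. rewrite GF. lra.
    - intros a _; apply Fc.
    - split; [rewrite <- (FG y) at 2 | rewrite <- (FG y) at 1]; apply Inc; lra. }
  assert (Prf : forall a, G (y - 1) <= a <= G (y + 1) -> derivable_pt F a) by (intros; apply Fd).
  assert (Hi : G (y - 1) <= G y <= G (y + 1)) by (split; left; apply Gmono; lra).
  pose proof (Ranalysis5.derivable_pt_lim_recip_interv F G (y - 1) (y + 1) y Prf Gc
     ltac:(lra) ltac:(lra) Hi) as L.
  assert (E : derive_pt F (G y) (Prf (G y) Hi) = df (G y)).
  { rewrite Derive_Reals. apply is_derive_unique, D. }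
  rewrite E in L. apply is_derive_Reals.
  replace (/ df (G y)) with (1 / df (G y)) by (unfold Rdiv; ring).
  apply L.
  - intros a _. unfold comp, id. apply FG.
  - specialize (P (G y)). lra.
Qed.


Section Per.
Variable f : R -> R.
Hypothesis fc : forall x, continuous f x.
Hypothesis fp : forall x, f (x + 1) = f x.

Lemma exR a b : ex_RInt f a b.
Proof. apply (ex_RInt_continuous (V:=R_CompleteNormedModule)); intros; apply fc. Qed.

Lemma per_int a : RInt f a (a + 1) = RInt f 0 1.
Proof.
  rewrite <- (RInt_Chasles f a 1 (a+1)) by apply exR.
  assert (E : RInt f 1 (a + 1) = RInt f 0 a).
  { pose proof (RInt_comp_lin f 1 1 0 a) as L.
    replace (1 * 0 + 1) with 1 in L by ring.
    replace (1 * a + 1) with (a + 1) in L by ring.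
    rewrite <- L by apply exR.
    apply RInt_ext. intros x _. unfold scal; simpl; unfold mult; simpl.
    replace (1 * x + 1) with (x + 1) by ring. rewrite fp. ring. }
  rewrite E. rewrite <- (RInt_Chasles f 0 a 1) by apply exR.
  unfold plus; simpl. ring.
Qed.

Lemma prim_derive x : is_derive (fun y => RInt f 0 y) x (f x).
Proof.
  apply (is_derive_RInt f (fun y => RInt f 0 y) 0 x).
  - apply filter_forall. intro; apply (RInt_correct (V:=R_CompleteNormedModule)), exR.
  - apply fc.
Qed.

Lemma prim_per x : RInt f 0 (x + 1) = RInt f 0 x + RInt f 0 1.
Proof.
  rewrite <- (RInt_Chasles f 0 x (x+1)) by apply exR.
  rewrite per_int. reflexivity.
Qed.
End Per.


Lemma smooth_ex m : smooth m -> forall x, ex_derive m x.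
Proof. intros H x. exact (H 1%nat x). Qed.

Lemma smooth_cont m : smooth m -> forall x, continuous m x.
Proof. intros H x. exact (ex_derive_continuous m x (smooth_ex m H x)). Qed.

Lemma smooth_Derive m : smooth m -> smooth (Derive m).
Proof.
  intro H. apply smooth_Cn. intro n. apply smooth_Cn with (n := S n) in H.
  apply Cn_S in H. tauto.
Qed.

Lemma Cn_smooth_S m : (forall x, ex_derive m x) -> smooth (Derive m) -> smooth m.
Proof.
  intros D S. apply smooth_Cn. intros [|n]. apply Cn_0.
  apply Cn_S. split; auto. apply smooth_Cn; auto.
Qed.

Lemma sign_const m : nonvanishing_density m -> forall a b, 0 < m a -> 0 < m b.
Proof.
  intros [[Sm _] Nz] a b Ha.
  destruct (Rlt_or_le 0 (m b)) as [h|h]; auto. exfalso.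
  assert (hb : m b < 0) by (destruct h; auto; exfalso; apply (Nz b); auto).
  destruct (IVT_gen_consistent m a b 0 (smooth_cont m Sm)) as [x [_ Hx]].
  - split; [apply Rle_trans with (m b); [apply Rmin_r|lra]
            |apply Rle_trans with (m a); [lra|apply Rmax_l]].
  - apply (Nz x Hx).
Qed.

Lemma sgn_pm m : sgn_dens m = 1 \/ sgn_dens m = -1.
Proof. unfold sgn_dens. destruct (Rlt_dec 0 (m 0)); auto. Qed.

Lemma m_sgn m : nonvanishing_density m -> forall x, m x = sgn_dens m * Rabs (m x).
Proof.
  intros Hm x. unfold sgn_dens. destruct (Rlt_dec 0 (m 0)) as [h|h].
  - pose proof (sign_const m Hm 0 x h). rewrite Rabs_pos_eq; lra.
  - destruct (Rlt_or_le 0 (m x)) as [h'|h'].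
    + exfalso. apply h. apply (sign_const m Hm x 0 h').
    + rewrite Rabs_left1; auto. ring.
Qed.

Lemma Rpower_pos x y : 0 < Rpower x y.
Proof. unfold Rpower. apply exp_pos. Qed.

Lemma rpow_inv1 x lam : 0 < x -> lam <> 0 -> Rpower (Rpower x (1/lam)) lam = x.
Proof. intros. rewrite Rpower_mult. replace (1/lam*lam) with 1 by (field; auto). apply Rpower_1; auto. Qed.

Lemma rpow_inv2 x lam : 0 < x -> lam <> 0 -> Rpower (Rpower x lam) (1/lam) = x.
Proof. intros. rewrite Rpower_mult. replace (lam*(1/lam)) with 1 by (field; auto). apply Rpower_1; auto. Qed.

Lemma Rpower_Rinv b c : 0 < b -> Rpower (/ b) c = / Rpower b c.
Proof. intro. unfold Rpower. rewrite ln_Rinv by auto. rewrite <- exp_Ropp. f_equal. ring. Qed.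

Definition fden (lam : R) (m : R -> R) x := Rpower (Rabs (m x)) (1 / lam).

Lemma fden_smooth lam m : nonvanishing_density m -> smooth (fden lam m).
Proof.
  intros [[Sm Pm] Nz]. apply smooth_Cn. intro n.
  apply Cn_ext with (fun x => Rpower (m x * m x) (1 / lam / 2)).
  - intro x. unfold fden. replace (1/lam/2) with (/2 * (1/lam)) by (unfold Rdiv; ring).
    rewrite <- Rpower_mult. rewrite Rpower_sqrt.
    + change (m x * m x) with (Rsqr (m x)). rewrite sqrt_Rsqr_abs. reflexivity.
    + specialize (Nz x). nra.
  - apply Cn_rpow. intro x; specialize (Nz x); nra.
    apply Cn_mult; apply smooth_Cn; auto.
Qed.

Lemma fden_per lam m : nonvanishing_density m -> forall x, fden lam m (x + 1) = fden lam m x.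
Proof. intros [[_ P] _] x. unfold fden. rewrite P. reflexivity. Qed.

Lemma H_prim lam m : H_m1 lam m = RInt (fden lam m) 0 1.
Proof. reflexivity. Qed.

Lemma H_pos lam m : nonvanishing_density m -> 0 < H_m1 lam m.
Proof.
  intro Hm. rewrite H_prim.
  pose proof (smooth_cont _ (fden_smooth lam m Hm)) as C.
  assert (D := prim_derive _ C).
  pose proof (incr_global _ _ D (fun x => Rpower_pos _ _) 0 1 ltac:(lra)) as I.
  simpl in I. rewrite RInt_point in I. exact I.
Qed.


Lemma part2 lam m xi : lam <> 0 -> nonvanishing_density m -> circ_diff xi ->
  invariant lam (act lam xi m) = invariant lam m.
Proof.
  intros hl Hm [Sx [Px Dx]].
  assert (Nz := proj2 Hm).
  unfold invariant. f_equal.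
  - unfold sgn_dens, act.
    pose proof (Rpower_pos (Derive xi 0) lam) as Pp.
    destruct (Rlt_dec 0 (m 0)) as [h|h]; destruct (Rlt_dec 0 (m (xi 0) * Rpower (Derive xi 0) lam)) as [h'|h']; auto.
    + exfalso; apply h'. apply Rmult_lt_0_compat; auto. apply (sign_const m Hm 0); auto.
    + exfalso; apply h. apply (sign_const m Hm (xi 0)). 
      destruct (Rlt_or_le 0 (m (xi 0))) as [q|q]; auto. nra.
  - f_equal. unfold H_m1.
    transitivity (RInt (fun y => scal (Derive xi y) (fden lam m (xi y))) 0 1).
    + apply RInt_ext. intros x _. unfold act, scal, fden; simpl; unfold mult; simpl.
      rewrite Rabs_mult. rewrite (Rabs_pos_eq (Rpower _ lam)) by (left; apply Rpower_pos).
      rewrite <- Rpower_mult_distr.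
      * rewrite rpow_inv2 by auto. ring.
      * apply Rabs_pos_lt, Nz.
      * apply Rpower_pos.
    + rewrite (RInt_comp (V:=R_CompleteNormedModule)).
      * replace (xi 1) with (xi 0 + 1) by (rewrite <- Px; f_equal; ring). rewrite per_int. reflexivity.
        apply smooth_cont, fden_smooth; auto. apply fden_per; auto.
      * intros; apply smooth_cont, fden_smooth; auto.
      * intros x _. split. apply Derive_correct, smooth_ex; auto.
        apply smooth_cont, smooth_Derive; auto.
Qed.


Lemma part3 lam m1 m2 : lam <> 0 -> nonvanishing_density m1 -> nonvanishing_density m2 ->
  sgn_dens m1 = sgn_dens m2 -> H_m1 lam m1 = H_m1 lam m2 -> same_orbit lam m1 m2.
Proof.
  intros hl Hm1 Hm2 Es EH.
  set (f1 := fden lam m1). set (f2 := fden lam m2).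
  set (H := H_m1 lam m1).
  assert (Hp : 0 < H) by (apply H_pos; auto).
  set (F1 := fun y : R => (RInt f1 0 y : R)). set (F2 := fun y : R => (RInt f2 0 y : R)).
  assert (S1 : smooth f1) by (apply fden_smooth; auto).
  assert (S2 : smooth f2) by (apply fden_smooth; auto).
  assert (C1 := smooth_cont _ S1). assert (C2 := smooth_cont _ S2).
  assert (D1 : forall x, is_derive F1 x (f1 x)) by (intro; apply prim_derive; auto).
  assert (D2 : forall x, is_derive F2 x (f2 x)) by (intro; apply prim_derive; auto).
  assert (P1 : forall x, F1 (x + 1) = F1 x + H).
  { intro x. unfold F1. rewrite prim_per; auto. apply fden_per; auto. }
  assert (P2 : forall x, F2 (x + 1) = F2 x + H).
  { intro x. unfold F2, H. rewrite EH. rewrite prim_per; auto. apply fden_per; auto. }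
  assert (pos1 : forall x, 0 < f1 x) by (intro; apply Rpower_pos).
  assert (pos2 : forall x, 0 < f2 x) by (intro; apply Rpower_pos).
  assert (Inc := incr_global F1 f1 D1 pos1).
  assert (F10 : F1 0 = 0) by (unfold F1; rewrite (RInt_point (V:=R_CompleteNormedModule)); reflexivity).
  assert (Fn : forall n, F1 (INR n) = INR n * H /\ F1 (- INR n) = - INR n * H).
  { induction n as [|n [IH1 IH2]].
    - simpl INR. rewrite Ropp_0, F10; split; ring.
    - rewrite S_INR. split.
      + rewrite P1, IH1. ring.
      + pose proof (P1 (- (INR n + 1))) as Q.
        replace (- (INR n + 1) + 1) with (- INR n) in Q by ring.
        rewrite IH2 in Q. lra. }
  assert (surj : forall y, exists x, F1 x = y).
  { intro y. destruct (INR_archimed H (Rabs y) Hp) as [n Hn].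
    destruct (Fn n) as [E1 E2].
    assert (Cf : forall x, continuous F1 x).
    { intro x. exact (ex_derive_continuous F1 x (ex_intro _ _ (D1 x))). }
    destruct (IVT_gen_consistent F1 (- INR n) (INR n) y Cf) as [x [_ Hx]].
    - rewrite E1, E2. split.
      + apply Rle_trans with (- INR n * H). apply Rmin_l.
        pose proof (Rle_abs (-y)). rewrite Rabs_Ropp in H0. lra.
      + apply Rle_trans with (INR n * H). pose proof (Rle_abs y). lra. apply Rmax_r.
    - exists x; exact Hx. }
  set (G := fun y => proj1_sig (constructive_indefinite_description _ (surj y))).
  assert (FG : forall y, F1 (G y) = y).
  { intro y. unfold G. destruct (constructive_indefinite_description _ _); auto. }
  assert (inj : forall a b, F1 a = F1 b -> a = b).
  { intros a b E. destruct (Rtotal_order a b) as [h|[h|h]]; auto.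
    apply Inc in h; lra. apply Inc in h; lra. }
  assert (GF : forall x, G (F1 x) = x) by (intro; apply inj; rewrite FG; auto).
  assert (Gper : forall y, G (y + H) = G y + 1).
  { intro y. apply inj. rewrite P1, !FG. reflexivity. }
  assert (DG : forall y, is_derive G y (/ f1 (G y))).
  { apply (inv_derive F1 G f1); auto. }
  assert (SG : smooth G).
  { apply smooth_Cn. induction n as [|n IH]. apply Cn_0.
    apply Cn_S. split. intro y; eexists; apply DG.
    apply Cn_ext with (fun y => / f1 (G y)).
    - intro y; symmetry; apply is_derive_unique, DG.
    - apply (Cn_comp n (fun x => / f1 x) G); auto.
      apply Cn_inv. intro x; specialize (pos1 x); lra.
      apply smooth_Cn; auto. }
  assert (SF2 : smooth F2).
  { apply Cn_smooth_S. intro; eexists; apply D2.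
    apply smooth_Cn. intro n. apply Cn_ext with f2.
    intro; symmetry; apply is_derive_unique, D2. apply smooth_Cn; auto. }
  set (xi := fun x => G (F2 x)).
  assert (Dxi : forall x, is_derive xi x (f2 x * / f1 (xi x))).
  { intro x. unfold xi. apply (is_derive_comp G F2 x (/ f1 (G (F2 x))) (f2 x)).
    apply DG. apply D2. }
  exists xi. split.
  - split; [|split].
    + apply (proj2 (smooth_Cn xi)). intro n. apply (Cn_comp n G F2); apply smooth_Cn; auto.
    + intro x. unfold xi. rewrite P2, Gper. reflexivity.
    + intro x. rewrite (is_derive_unique _ _ _ (Dxi x)).
      apply Rmult_lt_0_compat; auto. apply Rinv_0_lt_compat; auto.
  - intro x. unfold act. rewrite (is_derive_unique _ _ _ (Dxi x)).
    rewrite <- Rpower_mult_distr by (auto; apply Rinv_0_lt_compat; auto).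
    rewrite Rpower_Rinv by auto.
    unfold f1, f2, fden. rewrite !rpow_inv1 by (auto; apply Rabs_pos_lt; apply Hm1 || apply Hm2).
    rewrite (m_sgn m2 Hm2 x) at 1. rewrite (m_sgn m1 Hm1 (xi x)) at 1. rewrite Es.
    assert (Rabs (m1 (xi x)) <> 0) by (apply Rabs_no_R0, Hm1).
    field; auto.
Qed.

Theorem proposition4p2 (lam : R) (hlam : lam <> 0) :
  (* the invariant takes values in R \ {0} *)
  (forall m, nonvanishing_density m -> invariant lam m <> 0) /\
  (* it is constant on Diff(S^1)-orbits *)
  (forall m xi, nonvanishing_density m -> circ_diff xi ->
     invariant lam (act lam xi m) = invariant lam m) /\
  (* the induced map on orbits is injective *)
  (forall m1 m2, nonvanishing_density m1 -> nonvanishing_density m2 ->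
     invariant lam m1 = invariant lam m2 -> same_orbit lam m1 m2) /\
  (* and surjective onto R \ {0} *)
  (forall c, c <> 0 -> exists m, nonvanishing_density m /\ invariant lam m = c).
Proof.
  split; [|split; [|split]].
  - intros m Hm. unfold invariant. pose proof (Rpower_pos (H_m1 lam m) lam).
    destruct (sgn_pm m) as [e|e]; rewrite e; lra.
  - intros; apply part2; auto.
  - intros m1 m2 H1 H2 E. unfold invariant in E.
    pose proof (Rpower_pos (H_m1 lam m1) lam). pose proof (Rpower_pos (H_m1 lam m2) lam).
    assert (Es : sgn_dens m1 = sgn_dens m2).
    { destruct (sgn_pm m1) as [e1|e1]; destruct (sgn_pm m2) as [e2|e2];
        rewrite ?e1, ?e2 in *; lra. }
    apply part3; auto.
    rewrite Es in E.
    assert (E' : Rpower (H_m1 lam m1) lam = Rpower (H_m1 lam m2) lam).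
    { destruct (sgn_pm m2) as [e|e]; rewrite e in E; lra. }
    apply (f_equal (fun t => Rpower t (1 / lam))) in E'.
    rewrite !rpow_inv2 in E' by (auto; apply H_pos; auto). exact E'.
  - intros c hc. exists (fun _ => c). split.
    + split. split. intros n x. apply ex_derive_n_const. intro; reflexivity.
      intros _; auto.
    + unfold invariant, H_m1. rewrite (RInt_const (V:=R_CompleteNormedModule)).
      unfold scal; simpl; unfold mult; simpl.
      replace (1 - 0) with 1 by ring. rewrite Rmult_1_l.
      rewrite rpow_inv1 by (auto; apply Rabs_pos_lt; auto).
      unfold sgn_dens. destruct (Rlt_dec 0 c) as [h|h].
      * rewrite Rabs_pos_eq; lra.
      * rewrite Rabs_left1; lra.
Qed.
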